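(* Let $G$ be a connected graph, $c\in V(G)$, and run the scan procedure at $c$ (with any processing order). Let $e$ and $f$ be two distinct edges incident to $c$. If $(e,f)\in\overline{\alpha}_c$, then either $e$ and $f$ span no square, or they span a square whose top vertex is not unique or is primal (i.e. lies in $N(c)$). Moreover, every pair $(e,f)$ of distinct edges incident to $c$ that span no square lies in $\overline{\alpha}_c$.
   Context: All graphs are finite, simple, undirected; $N(x)$ is the open neighborhood of $x$. For distinct edges $e=vu$, $f=vw$ sharing the vertex $v$, a square spanned by $e$ and $f$ is a 4-cycle $vuxw$ with $x\ne v$ adjacent to both $u$ and $w$; $x$ is its top vertex. A top vertex $x$ is unique if $|N(x)\cap N(v)|=2$. Scan procedure at $c$: the vertices of $N(c)$ are called primal, and edges incident to $c$ primal edges. Maintain two sets $I$ (incidence list) and $A$ (absence list) of unordered pairs of primal edges, both initially empty, and for every non-primal vertex $w\ne c$ a record of at most two ''recorded primal neighbors'' (first and second), initially none. Process the neighbors $u$ of $c$ one by one in an arbitrary order, and for each such $u$ process its neighbors $w\neq c$ in an arbitrary order: (1) if $w\in N(c)$, add $\{cu,cw\}$ to $A$; (2) else, if $w$ has no recorded primal neighbor, record $u$ as its first primal neighbor; (3) else, if $w$ has exactly one recorded primal neighbor $v$, record $u$ as its second primal neighbor, and if $\{cu,cv\}\notin I$ add $\{cu,cv\}$ to $I$, otherwise add $\{cu,cv\}$ to $A$; (4) else ($w$ has recorded first and second primal neighbors $v_1,v_2$) add $\{cv_1,cv_2\},\{cv_1,cu\},\{cv_2,cu\}$ to $A$ (the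 record is not changed). After the procedure, $\alpha_c$ is the symmetric relation on primal edges consisting of the pairs in $I$, $\beta_c$ the symmetric relation consisting of the pairs in $A$, and $\overline{\alpha}_c$ the set of pairs of primal edges not in $I$. *)

(* Defs.v *)
From mathcomp Require Import all_boot.
Set Warnings "-notation-overridden".
Set Implicit Arguments. Unset Strict Implicit. Unset Printing Implicit Defensive.

(* A primal edge c-u is identified with its primal endpoint u; an unordered
   pair of primal edges {cu, cw} is stored as an ordered pair (u, w) and
   membership is tested up to swapping. *)

Section Scan.
Variables (T : finType) (adj : rel T) (c : T).

Definition simple_graph := symmetric adj /\ irreflexive adj.
Definition connected_graph := forall x y : T, connect adj x y.

Definition in_pairs (P : seq (T * T)) (u w : T) : bool :=
  ((u, w) \in P) || ((w, u) \in P).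

(* State of the scan: incidence list I, absence list A, and for each vertex
   the list of its recorded primal neighbors (first, second), at most two. *)
Record scan_state := ScanState {
  st_I : seq (T * T);
  st_A : seq (T * T);
  st_rec : T -> seq T }.

Definition upd_rec (r : T -> seq T) (w : T) (s : seq T) : T -> seq T :=
  fun x => if x == w then s else r x.

(* Processing neighbor w (w <> c) of the primal vertex u. *)
Definition scan_step (u : T) (st : scan_state) (w : T) : scan_state :=
  let: ScanState Ii Aa r := st in
  if adj c w then ScanState Ii ((u, w) :: Aa) r
  else match r w with
  | [::] => ScanState Ii Aa (upd_rec r w [:: u])
  | [:: v] =>
      if in_pairs Ii u v then ScanState Ii ((u, v) :: Aa) (upd_rec r w [:: v; u])
      else ScanState ((u, v) :: Ii) Aa (upd_rec r w [:: v; u])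
  | v1 :: v2 :: _ =>
      ScanState Ii [:: (v1, v2), (v1, u), (v2, u) & Aa] r
  end.

Definition scan (ordc : seq T) (ordn : T -> seq T) : scan_state :=
  foldl (fun st u => foldl (scan_step u) st (ordn u))
        (ScanState [::] [::] (fun _ => [::])) ordc.

Definition valid_order (ordc : seq T) (ordn : T -> seq T) : Prop :=
  uniq ordc /\ (forall x, (x \in ordc) = adj c x) /\
  (forall u, uniq (ordn u) /\ forall x, (x \in ordn u) = adj u x && (x != c)).

Definition alpha_c ordc ordn (u w : T) : bool := in_pairs (st_I (scan ordc ordn)) u w.
Definition alphabar_c ordc ordn (u w : T) : bool := ~~ alpha_c ordc ordn u w.

Definition top_vertex (u w x : T) : bool := [&& x != c, adj x u & adj x w].
Definition span_square (u w : T) : Prop := exists x, top_vertex u w x.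

Definition unique_top (x : T) : bool := #|[set y | adj x y && adj c y]| == 2.

End Scan.

(* Main.v *)
Require Import Defs.
From mathcomp Require Import all_boot.
Set Implicit Arguments. Unset Strict Implicit. Unset Printing Implicit Defensive.

Lemma take_take_cat (T : Type) n (s t : seq T) : take n (take n s ++ t) = take n (s ++ t).
Proof. by elim: s n => [|a s IH] [|n] //=; rewrite ?take0 ?IH. Qed.

Section Proof.
Variables (T : finType) (adj : rel T) (c : T).
Hypothesis adj_sym : symmetric adj.

Lemma in_pairsC (P : seq (T * T)) a b : in_pairs P a b = in_pairs P b a.
Proof. by rewrite /in_pairs orbC. Qed.

Lemma in_pairs_cons (P : seq (T * T)) p a b : in_pairs P a b -> in_pairs (p :: P) a b.
Proof. by rewrite /in_pairs !in_cons => /orP[->|->]; rewrite ?orbT. Qed.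

Definition inv2 (st : scan_state T) :=
 (forall p, p \in st_I st -> exists x, top_vertex adj c p.1 p.2 x) /\
 (forall z y, y \in st_rec st z -> adj z y && (z != c)).

Lemma step_inv2 u st w : adj u w -> w != c -> inv2 st -> inv2 (scan_step adj c u st w).
Proof.
move=> auw wc; case: st => Ii Aa r; rewrite /inv2 /= => -[HI Hr].
case: (adj c w) => //.
case Erw: (r w) => [|v [|v2 s]] //.
- split=> // z y /=; rewrite /upd_rec; case: ifP => [/eqP->|_]; last exact: Hr.
  by rewrite inE => /eqP ->; rewrite (adj_sym w u) auw wc.
- have hv : adj w v && (w != c) by apply: Hr; rewrite Erw inE.
  have Hr' : forall z y, y \in upd_rec r w [:: v; u] z -> adj z y && (z != c).
    move=> z y; rewrite /upd_rec; case: ifP => [/eqP->|_]; last exact: Hr.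
    by rewrite !inE => /orP[/eqP->|/eqP->] //; rewrite (adj_sym w u) auw wc.
  case: (in_pairs Ii u v); split => //=.
  move=> p; rewrite inE => /orP[/eqP->|]; last exact: HI.
  exists w; rewrite /top_vertex /= wc (adj_sym w u) auw.
  by case/andP: hv => ->.
Qed.

Lemma fold_inv2 u st s : (forall w, w \in s -> adj u w && (w != c)) -> inv2 st ->
  inv2 (foldl (scan_step adj c u) st s).
Proof.
elim: s st => //= w s IH st Hs H; apply: IH.
  by move=> w' h; apply: Hs; rewrite inE h orbT.
by have /andP[h1 h2] := Hs w (mem_head _ _); apply: step_inv2.
Qed.

Lemma scan_inv2 ordc ordn : (forall u x, x \in ordn u -> adj u x && (x != c)) ->
  inv2 (scan adj c ordc ordn).
Proof.
move=> Hn; rewrite /scan.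
have : inv2 (ScanState [::] [::] (fun _ => [::])) by split.
elim: ordc (ScanState _ _ _) => //= u s IH st H; apply: IH.
by apply: fold_inv2 => // w; apply: Hn.
Qed.

Section Part1.
Variable x : T.
Hypothesis ncx : ~~ adj c x.

Definition inv1 (st : scan_state T) := size (st_rec st x) <= 2 /\
  (match st_rec st x with [:: a; b] => in_pairs (st_I st) a b | _ => true end).

Lemma inv1_mono I I' A A' r r' : r' x = r x ->
  (forall a b, in_pairs I a b -> in_pairs I' a b) ->
  inv1 (ScanState I A r) -> inv1 (ScanState I' A' r').
Proof.
rewrite /inv1 /= => -> HI [H1 H2]; split => //.
by case: (r x) H2 => [|a [|b [|]]] //; apply: HI.
Qed.

Lemma step_inv1 u st w : inv1 st -> inv1 (scan_step adj c u st w) /\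
  st_rec (scan_step adj c u st w) x =
    if w == x then take 2 (rcons (st_rec st x) u) else st_rec st x.
Proof.
case: st => Ii Aa r H.
case: (eqVneq w x) => [->|nwx].
- move: H; rewrite /inv1 /= (negbTE ncx).
  case Erx: (r x) => [|v [|v2 s]] /= [Hs Hp].
  + by rewrite /upd_rec eqxx.
  + case: ifP => Hin /=; rewrite /upd_rec eqxx /=; split => //.
      by rewrite in_pairsC.
    by rewrite in_pairsC /in_pairs mem_head.
  + rewrite Erx take0; move: Hs Hp; clear Erx; by case: s.
- rewrite /=; split; last first.
    case: (adj c w) => //; case: (r w) => [|v [|v2 s]] //=;
      try case: ifP => //= _; by rewrite /upd_rec eq_sym (negbTE nwx).
  case: (adj c w) => /=; first by apply: (inv1_mono _ _ _ H).
  case: (r w) => [|v [|v2 s]] /=; try case: ifP => _;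
    apply: (inv1_mono _ _ _ H) => //; try by rewrite /upd_rec eq_sym (negbTE nwx).
  by move=> a b; apply: in_pairs_cons.
Qed.

Lemma fold_inv1 u st s : inv1 st -> inv1 (foldl (scan_step adj c u) st s) /\
  st_rec (foldl (scan_step adj c u) st s) x =
    take 2 (st_rec st x ++ nseq (count_mem x s) u).
Proof.
elim: s st => [|w s IH] st H /=.
  by rewrite cats0; split => //; case: H => H _; rewrite take_oversize.
have [H1 E1] := step_inv1 u w H.
have [H2 E2] := IH _ H1; split => //; rewrite E2 E1.
case: ifP => _ /=.
  by rewrite take_take_cat cat_rcons.
by rewrite add0n.
Qed.

Lemma scan_inv1 ordc ordn st : inv1 st ->
  inv1 (foldl (fun st u => foldl (scan_step adj c u) st (ordn u)) st ordc) /\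
  st_rec (foldl (fun st u => foldl (scan_step adj c u) st (ordn u)) st ordc) x =
    take 2 (st_rec st x ++ flatten [seq nseq (count_mem x (ordn u)) u | u <- ordc]).
Proof.
elim: ordc st => [|u s IH] st H /=.
  by rewrite cats0; split => //; case: H => H _; rewrite take_oversize.
have [H1 E1] := fold_inv1 u (ordn u) H.
have [H2 E2] := IH _ H1; split => //.
by rewrite E2 E1 take_take_cat catA.
Qed.

Lemma flatten_nseq (l : seq T) (b : pred T) :
  flatten [seq nseq (b u) u | u <- l] = [seq u <- l | b u].
Proof. by elim: l => //= u l ->; case: (b u). Qed.

End Part1.

Lemma part1 ordc ordn u w x : valid_order adj c ordc ordn ->
  top_vertex adj c u w x -> unique_top adj c x -> ~~ adj c x ->
  adj c u -> adj c w -> u != w ->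
  in_pairs (st_I (scan adj c ordc ordn)) u w.
Proof.
move=> [uc [Hc Hn]] tx ux ncx cu cw uw.
case/and3P: tx => xc xu xw.
have H0 : inv1 x (ScanState [::] [::] (fun _ => [::])) by [].
have [H E] := scan_inv1 ncx ordc ordn H0.
rewrite /= in E.
have Ecnt : forall v, count_mem x (ordn v) = (x \in ordn v).
  by move=> v; rewrite count_uniq_mem //; case: (Hn v).
set L := [seq v <- ordc | x \in ordn v].
have EL : flatten [seq nseq (count_mem x (ordn u0)) u0 | u0 <- ordc] = L.
  transitivity (flatten [seq nseq (x \in ordn v) v | v <- ordc]).
    by congr flatten; apply: eq_map => v; rewrite Ecnt.
  exact: (flatten_nseq ordc (fun v => x \in ordn v)).
rewrite EL in E.
set S := [set y | adj x y && adj c y].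
have SE : S = [set u; w].
  apply/eqP; rewrite eq_sym eqEcard; apply/andP; split.
    by apply/subsetP => y; rewrite !inE => /orP[/eqP->|/eqP->]; rewrite ?xu ?cu ?xw ?cw.
  by rewrite cards2 uw; move/eqP: ux => ->.
have Lsub : {subset L <= [:: u; w]}.
  move=> y; rewrite mem_filter => /andP[hx hy].
  have : y \in S.
    rewrite inE -Hc hy andbT adj_sym.
    by case: (Hn y) => _ Hy; move: hx; rewrite Hy => /andP[].
  by rewrite SE !inE.
have inL : forall v, v \in [:: u; w] -> v \in L.
  move=> v; rewrite !inE => /orP[]/eqP->; rewrite mem_filter.
    by case: (Hn u) => _ ->; rewrite Hc cu (adj_sym u x) xu xc.
  by case: (Hn w) => _ ->; rewrite Hc cw (adj_sym w x) xw xc.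
have uL : uniq L by apply: filter_uniq.
have s1 : size L <= 2 by apply: (uniq_leq_size uL Lsub).
have s2 : 2 <= size L by apply: (uniq_leq_size (s1 := [:: u; w])) => //=; rewrite inE uw.
case: H; rewrite E; clear E EL.
have Lu := inL u; have Lw := inL w.
move: uL Lsub Lu Lw s1 s2; clear inL; case: L => [|a [|b [|]]] //= uL Lsub Lu Lw _ _ _.
have ha : a \in [:: u; w] by apply: Lsub; rewrite inE eqxx.
have hb : b \in [:: u; w] by apply: Lsub; rewrite !inE eqxx orbT.
rewrite !inE andbT in uL.
move: ha hb uL; rewrite !inE => /orP[]/eqP-> /orP[]/eqP->; rewrite ?eqxx //= => _; rewrite /scan.
by rewrite (in_pairsC _ w u).
Qed.

End Proof.

Theorem mainTheorem2 (T : finType) (adj : rel T) (c : T)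
    (ordc : seq T) (ordn : T -> seq T) :
  simple_graph adj -> connected_graph adj -> valid_order adj c ordc ordn ->
  (forall u w : T, adj c u -> adj c w -> u != w ->
     alphabar_c adj c ordc ordn u w ->
     ~ span_square adj c u w \/
     exists x, top_vertex adj c u w x && (~~ unique_top adj c x || adj c x)) /\
  (forall u w : T, adj c u -> adj c w -> u != w ->
     ~ span_square adj c u w -> alphabar_c adj c ordc ordn u w).
Proof.
move=> [sym irr] _ V; split.
- move=> u w cu cw uw Hab.
  case: (boolP [exists x, top_vertex adj c u w x]) => [/existsP[x tx]|nex]; last first.
    by left => -[x tx]; apply: (negP nex); apply/existsP; exists x.
  case: (boolP (~~ unique_top adj c x || adj c x)) => h.
    by right; exists x; rewrite tx h.
  exfalso; move: h; rewrite negb_or negbK => /andP[hu ncx].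
  by apply: (negP Hab); apply: (part1 sym V tx).
- move=> u w cu cw uw nsq; apply/negP => Hin.
  have [HI _] : inv2 adj c (scan adj c ordc ordn).
    apply: (scan_inv2 sym) => u0 x0 h; case: V => _ [_ Hn]; by rewrite -(proj2 (Hn u0) x0).
  move: Hin; rewrite /alpha_c /in_pairs => /orP[] /HI [x tx]; apply: nsq; exists x => //.
  by move: tx; rewrite /top_vertex /= => /and3P[-> -> ->].
Qed.
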